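(* Let $(R,\mathfrak m,k)$ be a commutative noetherian local ring. Let $A$ and $L$ be $R$-modules such that $A$ is artinian and $\mathfrak m^n\Gamma_{\mathfrak m}(L)=0$ for some $n\geq 1$. Fix an index $t\geq 0$ such that $\mathfrak m^tA=\mathfrak m^{t+1}A$, and let $s$ be an integer with $s\geq\min(n,t)$. Then $\operatorname{len}_R(\operatorname{Hom}_R(A,L))\leq\beta^R_0(A)\,\operatorname{len}_R(0:_L\mathfrak m^s)$, with the convention $0\cdot\infty=0$.
   Context: $\Gamma_{\mathfrak m}(L)=\{x\in L: \mathfrak m^nx=0 \text{ for } n\gg0\}$; $\beta^R_0(A)=\operatorname{len}_R(k\otimes_RA)$; $(0:_L\mathfrak m^s)=\{x\in L:\mathfrak m^sx=0\}$. *)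

(* Defs.v *)
From HB Require Import structures.
From mathcomp Require Import all_boot all_order all_algebra.
From mathcomp Require Import boolp classical_sets functions.
Set Implicit Arguments. Unset Strict Implicit. Unset Printing Implicit Defensive.
Import Order.TTheory GRing.Theory Num.Theory.
Local Open Scope ring_scope.

Section Defs.
Variable R : comNzRingType.

Definition is_ideal (I : R -> Prop) : Prop :=
  I 0 /\ (forall x y, I x -> I y -> I (x + y)) /\ (forall r x, I x -> I (r * x)).

Definition is_maximal_ideal (I : R -> Prop) : Prop :=
  is_ideal I /\ ~ I 1 /\
  forall J, is_ideal J -> (forall x, I x -> J x) -> ~ J 1 -> forall x, J x -> I x.

Definition is_local_with (m : R -> Prop) : Prop :=
  is_maximal_ideal m /\ forall J, is_maximal_ideal J -> forall x, J x <-> m x.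

Definition noetherian_ring : Prop :=
  forall I : nat -> R -> Prop, (forall i, is_ideal (I i)) ->
  (forall i x, I i x -> I i.+1 x) ->
  exists k, forall i, (k <= i)%N -> forall x, I i x -> I k x.

Definition ideal_mul (I J : R -> Prop) : R -> Prop := fun r =>
  exists (p : nat) (a b : 'I_p -> R),
    (forall i, I (a i)) /\ (forall i, J (b i)) /\ r = \sum_(i < p) a i * b i.

Fixpoint ideal_pow (m : R -> Prop) (j : nat) : R -> Prop :=
  if j is j'.+1 then ideal_mul (ideal_pow m j') m else (fun _ => True).

Section Modules.
Variable V : lmodType R.

Definition is_submodule (N : V -> Prop) : Prop :=
  N 0 /\ (forall x y, N x -> N y -> N (x + y)) /\ (forall r x, N x -> N (r *: x)).

Definition ideal_smul (I : R -> Prop) (N : V -> Prop) : V -> Prop := fun v =>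
  exists (p : nat) (a : 'I_p -> R) (x : 'I_p -> V),
    (forall i, I (a i)) /\ (forall i, N (x i)) /\ v = \sum_(i < p) a i *: x i.

Definition whole : V -> Prop := fun _ => True.
Definition zero_sub : V -> Prop := fun v => v = 0.

Definition artinian_module : Prop :=
  forall N : nat -> V -> Prop, (forall i, is_submodule (N i)) ->
  (forall i x, N i.+1 x -> N i x) ->
  exists k, forall i, (k <= i)%N -> forall x, N k x -> N i x.

Definition torsion_m (m : R -> Prop) : V -> Prop := fun x =>
  exists n, forall a, ideal_pow m n a -> a *: x = 0.

Definition annihilated_by (m : R -> Prop) (s : nat) : V -> Prop := fun x =>
  forall a, ideal_pow m s a -> a *: x = 0.

(* a strictly increasing chain of n+1 submodules, all lying between N and M;
   its existence means the R-module M/N has a composition-type chain of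
   length n, so the length of M/N is the supremum of such n. *)
Definition chain_between (N M : V -> Prop) (n : nat) : Prop :=
  exists c : nat -> V -> Prop,
    (forall i, is_submodule (c i)) /\
    (forall i x, (i <= n)%N -> N x -> c i x) /\
    (forall i x, (i <= n)%N -> c i x -> M x) /\
    (forall i, (i < n)%N -> (forall x, c i x -> c i.+1 x) /\
                            exists x, c i.+1 x /\ ~ c i x).

Definition length_bounded_by (N M : V -> Prop) (b : nat) : Prop :=
  forall n, chain_between N M n -> (n <= b)%N.

(* length of the R-module M/N, in nat extended by None = infinity *)
Definition len_quot (N M : V -> Prop) : option nat :=
  match pselect (exists b, length_bounded_by N M b) with
  | left h =>
      Some (@ex_minn (fun b => `[< length_bounded_by N M b >])
              (let: ex_intro b hb := h in ex_intro _ b (asboolT hb)))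
  | right _ => None
  end.

Definition len_sub (M : V -> Prop) : option nat := len_quot zero_sub M.
End Modules.

(* Hom_R(A, L), as the submodule of R-linear maps in the R-module A -> L *)
Definition Hom_sub (A L : lmodType R) : (A -> L) -> Prop := fun f =>
  forall (r : R) (x y : A), f (r *: x + y) = r *: f x + f y.

End Defs.

(* extended naturals: None = infinity, with 0 * infinity = 0 *)
Definition emul (a b : option nat) : option nat :=
  match a, b with
  | Some 0, _ | _, Some 0 => Some 0
  | Some x, Some y => Some (x * y)%N
  | _, _ => None
  end.

Definition ele (a b : option nat) : Prop :=
  match a, b with
  | _, None => True
  | None, Some _ => False
  | Some x, Some y => (x <= y)%N
  end.

(* Main.v *)
Require Import Defs.
From HB Require Import structures.
From mathcomp Require Import all_boot all_order all_algebra.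
From mathcomp Require Import boolp classical_sets functions.
Set Implicit Arguments. Unset Strict Implicit. Unset Printing Implicit Defensive.
Import GRing.Theory.
Local Open Scope ring_scope.

Definition gspan {X Y : Type} {V : zmodType} (op : X -> Y -> V)
  (P : X -> Prop) (Q : Y -> Prop) (v : V) : Prop :=
  exists p (a : 'I_p -> X) (x : 'I_p -> Y),
    (forall i, P (a i)) /\ (forall i, Q (x i)) /\ v = \sum_(i < p) op (a i) (x i).

Section G.
Variables (X Y : Type) (V : zmodType) (op : X -> Y -> V) (P : X -> Prop) (Q : Y -> Prop).

Lemma gspan_ind (S : V -> Prop) : S 0 -> (forall u w, S u -> S w -> S (u + w)) ->
  (forall a x, P a -> Q x -> S (op a x)) -> forall v, gspan op P Q v -> S v.
Proof.
move=> S0 SD Sg v [p [a [x [Ha [Hx ->]]]]].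
elim: p a x Ha Hx => [|p IH] a x Ha Hx; first by rewrite big_ord0.
rewrite big_ord_recr /=; apply: SD; last exact: Sg.
exact: (IH (fun i => a (widen_ord (leqnSn p) i)) (fun i => x (widen_ord (leqnSn p) i))).
Qed.

Lemma gspan0 : gspan op P Q 0.
Proof. exists 0%N, (fun i : 'I_0 => False_rect _ (notF (ltn_ord i))),
  (fun i : 'I_0 => False_rect _ (notF (ltn_ord i))).
split; first by case. split; first by case. by rewrite big_ord0.
Qed.

Lemma gspan1 a x : P a -> Q x -> gspan op P Q (op a x).
Proof.
move=> Pa Qx; exists 1%N, (fun _ => a), (fun _ => x); do 2!split => //.
by rewrite big_ord1.
Qed.

Lemma gspanD u w : gspan op P Q u -> gspan op P Q w -> gspan op P Q (u + w).
Proof.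
move=> [p [a [x [Ha [Hx ->]]]]] [q [b [y [Hb [Hy ->]]]]].
exists (p + q)%N, (fun i => match fintype.split i with inl j => a j | inr j => b j end),
  (fun i => match fintype.split i with inl j => x j | inr j => y j end).
split; first by move=> i; case: (fintype.split i).
split; first by move=> i; case: (fintype.split i).
rewrite big_split_ord /=; congr (_ + _); apply: eq_bigr => i _.
  by rewrite (unsplitK (inl _ i)).
by rewrite (unsplitK (inr _ i)).
Qed.
End G.

Section Rsec.
Variable R : comNzRingType.

Lemma mulE (I J : R -> Prop) v : ideal_mul I J v = gspan (fun a b => a * b) I J v.
Proof. by []. Qed.

Lemma pow_ideal (m : R -> Prop) k : is_ideal m -> is_ideal (ideal_pow m k).
Proof.
move=> Hm; elim: k => [|k [I0 [ID IM]]] /=; first by [].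
split; first exact: gspan0.
split; first by move=> x y; apply: gspanD.
move=> r; apply: gspan_ind.
- by rewrite mulr0; apply: gspan0.
- by move=> u w Hu Hw; rewrite mulrDr; apply: gspanD.
- by move=> a b Ha Hb; rewrite mulrA; apply: gspan1 => //; apply: IM.
Qed.

Lemma pow_succ_sub (m : R -> Prop) k : is_ideal m -> forall a, ideal_pow m k.+1 a -> ideal_pow m k a.
Proof.
move=> Hm; have [I0 [ID IM]] := pow_ideal k Hm.
apply: gspan_ind => // a b Ha Hb; rewrite mulrC; exact: IM.
Qed.

Lemma pow_le (m : R -> Prop) k l : is_ideal m -> (k <= l)%N -> forall a, ideal_pow m l a -> ideal_pow m k a.
Proof.
move=> Hm; elim: l => [|l IH]; first by rewrite leqn0 => /eqP->.
rewrite leq_eqVlt => /orP[/eqP-> //|]; rewrite ltnS => kl a Ha.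
by apply: IH => //; apply: pow_succ_sub.
Qed.

Section Mod.
Variable V : lmodType R.

Lemma smulE (I : R -> Prop) (N : V -> Prop) v :
  ideal_smul I N v = gspan (fun (a : R) (x : V) => a *: x) I N v.
Proof. by []. Qed.

Lemma smul_le (I : R -> Prop) (N W : V -> Prop) : is_submodule W ->
  (forall a x, I a -> N x -> W (a *: x)) -> forall v, ideal_smul I N v -> W v.
Proof. move=> [W0 [WD WZ]] Hg v; apply: gspan_ind => //. Qed.

Lemma smul_sub (I : R -> Prop) (N : V -> Prop) : is_ideal I -> is_submodule (ideal_smul I N).
Proof.
move=> [I0 [ID IM]]; split; first exact: gspan0.
split; first by move=> x y; apply: gspanD.
move=> r; apply: gspan_ind.
- by rewrite scaler0; apply: gspan0.
- by move=> u w Hu Hw; rewrite scalerDr; apply: gspanD.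
- by move=> a x Ha Hx; rewrite scalerA; apply: gspan1 => //; apply: IM.
Qed.

Lemma smul_monoN (I : R -> Prop) (N N' : V -> Prop) : (forall x, N x -> N' x) ->
  forall v, ideal_smul I N v -> ideal_smul I N' v.
Proof.
move=> H v [p [a [x [Ha [Hx ->]]]]]; exists p, a, x; split => //; split => //.
by move=> i; apply: H.
Qed.

Lemma smul_monoI (I I' : R -> Prop) (N : V -> Prop) : (forall x, I x -> I' x) ->
  forall v, ideal_smul I N v -> ideal_smul I' N v.
Proof.
move=> H v [p [a [x [Ha [Hx ->]]]]]; exists p, a, x; split; last by split.
by move=> i; apply: H.
Qed.

Lemma smul_succ (m : R -> Prop) k (N : V -> Prop) : is_ideal m ->
  forall v, ideal_smul (ideal_pow m k.+1) N v -> ideal_smul m (ideal_smul (ideal_pow m k) N) v.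
Proof.
move=> Hm; have [T0 [TD TZ]] := smul_sub (ideal_smul (ideal_pow m k) N) Hm.
apply: smul_le; first exact: smul_sub.
move=> a x Ha Hx; move: a Ha; apply: gspan_ind.
- by rewrite scale0r.
- by move=> u w Hu Hw; rewrite scalerDl; apply: TD.
- move=> c b Hc Hb; rewrite mulrC -scalerA; apply: gspan1 => //.
  exact: gspan1.
Qed.

Lemma smul_succ' (m : R -> Prop) k (N : V -> Prop) : is_ideal m ->
  forall v, ideal_smul m (ideal_smul (ideal_pow m k) N) v -> ideal_smul (ideal_pow m k.+1) N v.
Proof.
move=> Hm; have Hk1 := pow_ideal k.+1 Hm.
have [T0 [TD TZ]] := smul_sub N Hk1.
apply: smul_le; first exact: smul_sub.
move=> b w Hb; move: w; apply: gspan_ind.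
- by rewrite scaler0.
- by move=> u w Hu Hw; rewrite scalerDr; apply: TD.
- move=> a x Ha Hx; rewrite scalerA mulrC; apply: gspan1 => //.
  exact: gspan1.
Qed.

Lemma sub_opp (W : V -> Prop) x : is_submodule W -> W x -> W (- x).
Proof. by move=> [W0 [WD WZ]] Wx; rewrite -scaleN1r; apply: WZ. Qed.

End Mod.

Section Lin.
Variables V W : lmodType R.
Definition is_lin (f : V -> W) := forall r x y, f (r *: x + y) = r *: f x + f y.
Variable f : V -> W.
Hypothesis fl : is_lin f.
Lemma lin0 : f 0 = 0.
Proof. have := fl 1 0 0; rewrite scaler0 addr0 scale1r.
by move/(congr1 (fun z => z - f 0)); rewrite addrK subrr => <-. Qed.
Lemma linD x y : f (x + y) = f x + f y.
Proof. by have := fl 1 x y; rewrite !scale1r. Qed.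
Lemma linZ r x : f (r *: x) = r *: f x.
Proof. by have := fl r x 0; rewrite addr0 lin0 addr0. Qed.

Lemma smul_image (I : R -> Prop) (N : V -> Prop) v : ideal_smul I N v ->
  ideal_smul I (fun y => exists x, N x /\ y = f x) (f v).
Proof.
move: v; apply: gspan_ind.
- by rewrite lin0; apply: gspan0.
- by move=> u w Hu Hw; rewrite linD; apply: gspanD.
- by move=> a x Ha Hx; rewrite linZ; apply: gspan1 => //; exists x.
Qed.
End Lin.

Lemma ideal_sum (I : R -> Prop) r (F : nat -> R) : is_ideal I -> (forall i, I (F i)) ->
  I (\sum_(i < r) F i).
Proof.
move=> [I0 [ID IM]] HF; elim: r => [|r IH]; first by rewrite big_ord0.
by rewrite big_ord_recr /=; apply: ID.
Qed.

Section Greedy.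
Variables (V : lmodType R) (T X0 : V -> Prop).
Definition pk (X : V -> Prop) : V :=
  match pselect (exists y, T y /\ ~ X y) with
  | left h => proj1_sig (cid h) | right _ => 0 end.
Fixpoint Gr i : V -> Prop :=
  if i is i'.+1 then fun v => exists w r, Gr i' w /\ v = w + r *: pk (Gr i') else X0.

Lemma pk_spec X : (exists y, T y /\ ~ X y) -> T (pk X) /\ ~ X (pk X).
Proof. rewrite /pk; case: pselect => h //= _; exact: (proj2_sig (cid h)). Qed.

Lemma pk_T X : T 0 -> T (pk X).
Proof. rewrite /pk; case: pselect => h //= _; exact: (proj1 (proj2_sig (cid h))). Qed.

Hypothesis X0sub : is_submodule X0.

Lemma Gr_sub i : is_submodule (Gr i).
Proof.
elim: i => [//|i [G0 [GD GZ]]] /=; split.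
  by exists 0, 0; rewrite scale0r addr0.
split.
  move=> x y [w [r [Hw ->]]] [w' [r' [Hw' ->]]]; exists (w + w'), (r + r'); split; first exact: GD.
  by rewrite scalerDl addrACA.
move=> s x [w [r [Hw ->]]]; exists (s *: w), (s * r); split; first exact: GZ.
by rewrite scalerDr scalerA.
Qed.

Lemma Gr_S i x : Gr i x -> Gr i.+1 x.
Proof. by move=> Hx; exists x, 0; rewrite scale0r addr0. Qed.

Lemma Gr_le i j : (i <= j)%N -> forall x, Gr i x -> Gr j x.
Proof.
elim: j => [|j IH]; first by rewrite leqn0 => /eqP->.
rewrite leq_eqVlt => /orP[/eqP-> //|]; rewrite ltnS => ij x Hx.
by apply: Gr_S; apply: IH.
Qed.

Lemma Gr_pk i : Gr i.+1 (pk (Gr i)).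
Proof. have [G0 _] := Gr_sub i; by exists 0, 1; rewrite scale1r add0r. Qed.

Lemma Gr_T : is_submodule T -> (forall x, X0 x -> T x) -> forall i x, Gr i x -> T x.
Proof.
move=> [T0 [TD TZ]] HX; elim=> [//|i IH] x [w [r [Hw ->]]].
by apply: TD; [apply: IH | apply: TZ; apply: pk_T].
Qed.

Lemma Gr_repr i v : Gr i v -> exists w (c : nat -> R),
  X0 w /\ v = w + \sum_(p < i) c p *: pk (Gr p).
Proof.
elim: i v => [|i IH] v /=.
  by move=> Hv; exists v, (fun _ => 0); rewrite big_ord0 addr0.
move=> [w' [r [/IH [w [c [Hw ->]]] ->]]].
exists w, (fun p => if p == i then r else c p); split => //.
rewrite big_ord_recr /= eqxx -addrA; congr (_ + (_ + _)).
by apply: eq_bigr => p _; rewrite ltn_eqF.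
Qed.
End Greedy.

Lemma exists_max (J : R -> Prop) : noetherian_ring R -> is_ideal J -> ~ J 1 ->
  exists M, is_maximal_ideal M /\ forall x, J x -> M x.
Proof.
move=> Hn HJ J1.
pose propI (I K : R -> Prop) := is_ideal K /\ ~ K 1 /\ (forall x, I x -> K x) /\
   exists y, K y /\ ~ I y.
pose nxt (I : R -> Prop) := match pselect (exists K, propI I K) with
  | left h => proj1_sig (cid h) | right _ => I end.
have nxt_spec : forall I, (exists K, propI I K) -> propI I (nxt I).
  by move=> I; rewrite /nxt; case: pselect => h //= _; exact: (proj2_sig (cid h)).
have nxt_no : forall I, ~ (exists K, propI I K) -> nxt I = I.
  by move=> I; rewrite /nxt; case: pselect.
pose c i := iter i nxt J.
have Hc : forall i, is_ideal (c i) /\ ~ c i 1 /\ forall x, c i x -> c i.+1 x.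
  elim=> [|i [IH1 [IH2 IH3]]].
  - split=> //; split=> // x Hx /=.
    case: (pselect (exists K, propI J K)) => h.
      by have [_ [_ [H _]]] := nxt_spec _ h; apply: H.
    by rewrite nxt_no.
  - have [h1 h2] : is_ideal (c i.+1) /\ ~ c i.+1 1.
      case: (pselect (exists K, propI (c i) K)) => h.
        by have [? [? _]] := nxt_spec _ h.
      by rewrite /= nxt_no.
    split=> //; split=> // x Hx /=.
    case: (pselect (exists K, propI (c i.+1) K)) => h.
      by have [_ [_ [H _]]] := nxt_spec _ h; apply: H.
    by rewrite nxt_no.
have [k Hk] := Hn c (fun i => (Hc i).1) (fun i => (Hc i).2.2).
exists (c k); split; last first.
  have : forall i x, J x -> c i x by elim=> [//|i IH] x /IH; apply: (Hc i).2.2.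
  by move=> H x; apply: H.
split; first exact: (Hc k).1.
split; first exact: (Hc k).2.1.
move=> K HK sub K1 x Kx; case: (pselect (c k x)) => // ckx.
have h : exists K, propI (c k) K by exists K; split=> //; split=> //; split=> //; exists x.
have [_ [_ [_ [y [Hy Hny]]]]] := nxt_spec _ h.
by exfalso; apply: Hny; apply: (Hk k.+1 (leqnSn k)).
Qed.

Lemma local_ideal (m : R -> Prop) : is_local_with m -> is_ideal m /\ ~ m 1.
Proof. by move=> [[H1 [H2 _]] _]. Qed.

Lemma unit_1m (m : R -> Prop) : noetherian_ring R -> is_local_with m ->
  forall a, m a -> exists u, u * (1 - a) = 1.
Proof.
move=> Hn Hl a ma.
have [[m0 [mD mM]] m1] := local_ideal Hl.
pose J := fun y => exists r, y = r * (1 - a).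
case: (pselect (J 1)) => [[r Hr]|J1]; first by exists r.
have HJ : is_ideal J.
  split; first by exists 0; rewrite mul0r.
  split; first by move=> x y [r ->] [r' ->]; exists (r + r'); rewrite mulrDl.
  by move=> s x [r ->]; exists (s * r); rewrite mulrA.
have [M [HM JM]] := exists_max Hn HJ J1.
have m1a : m (1 - a) by apply/(Hl.2 M HM); apply: JM; exists 1; rewrite mul1r.
by exfalso; apply: m1; have := mD _ _ m1a ma; rewrite subrK.
Qed.

Definition spn (V : lmodType R) (z : nat -> V) r (P : R -> Prop) v :=
  exists c : nat -> R, (forall i, P (c i)) /\ v = \sum_(i < r) c i *: z i.

Lemma nakayama (V : lmodType R) (m : R -> Prop) : is_ideal m ->
  (forall a, m a -> exists u, u * (1 - a) = 1) ->
  forall r (z : nat -> V), (forall v, spn z r (fun _ => True) v -> spn z r m v) ->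
  forall v, spn z r (fun _ => True) v -> v = 0.
Proof.
move=> [m0 [mD mM]] Hu; elim=> [|r IH] z Hz v.
  by move=> [c [_ ->]]; rewrite big_ord0.
have zr : spn z r.+1 (fun _ => True) (z r).
  exists (fun i => if i == r then 1 else 0); split=> //.
  rewrite big_ord_recr /= eqxx scale1r big1 ?add0r // => i _.
  by rewrite ltn_eqF // scale0r.
have [a [Ha Hza]] := Hz _ zr.
have [u Hua] := Hu _ (Ha r).
pose e i := u * a i.
have He : forall i, m (e i) by move=> i; apply: mM.
have Hze : z r = \sum_(i < r) e i *: z i.
  have : (1 - a r) *: z r = \sum_(i < r) a i *: z i.
    by rewrite scalerBl scale1r {1}Hza big_ord_recr /= addrK.
  move/(congr1 (fun w => u *: w)); rewrite scalerA Hua scale1r => ->.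
  by rewrite scaler_sumr; apply: eq_bigr => i _; rewrite scalerA.
have red : forall c : nat -> R, \sum_(i < r.+1) c i *: z i =
    \sum_(i < r) (c i + c r * e i) *: z i.
  move=> c; rewrite big_ord_recr /= Hze scaler_sumr -big_split /=.
  by apply: eq_bigr => i _; rewrite scalerA scalerDl.
have ext : forall v, spn z r (fun _ => True) v -> spn z r.+1 (fun _ => True) v.
  move=> w [c [_ ->]]; exists (fun i => if i == r then 0 else c i); split=> //.
  rewrite big_ord_recr /= eqxx scale0r addr0; apply: eq_bigr => i _.
  by rewrite ltn_eqF.
have Hr : forall w, spn z r (fun _ => True) w -> spn z r m w.
  move=> w /ext /Hz [b [Hb ->]]; exists (fun i => b i + b r * e i); split; last exact: red.
  by move=> i; apply: mD => //; rewrite mulrC; apply: mM.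
move=> [c [_ ->]]; rewrite red; apply: (IH z Hr).
by exists (fun i => c i + c r * e i).
Qed.

Lemma fg_ideal (I : R -> Prop) : noetherian_ring R -> is_ideal I ->
  exists r (g : nat -> R), (forall i, I (g i)) /\
    forall x, I x -> exists c : nat -> R, x = \sum_(i < r) c i * g i.
Proof.
move=> Hn HI.
have X0s : is_submodule (fun v : R^o => v = 0).
  split=> //; split; first by move=> x y -> ->; rewrite addr0.
  by move=> r x ->; rewrite scaler0.
pose G := @Gr R^o I (fun v => v = 0).
have Gi : forall i, is_ideal (G i) by move=> i; exact: (@Gr_sub R^o I _ X0s i).
have [k Hk] := Hn G Gi (fun i x => @Gr_S R^o I _ i x).
have I0 : I 0 by case: HI.
exists k, (fun p => @pk R^o I (G p)); split; first by move=> i; apply: pk_T.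
move=> x Ix.
have Gkx : G k x.
  case: (pselect (G k x)) => // h; exfalso.
  have [_ nG] := @pk_spec R^o I (G k) (ex_intro _ x (conj Ix h)).
  by apply: nG; apply: (Hk k.+1 (leqnSn k)); exact: (@Gr_pk R^o I _ X0s k).
have [w [c [-> ->]]] := @Gr_repr R^o I _ k x Gkx.
by exists c; rewrite add0r.
Qed.

Lemma torsion_artinian (m : R -> Prop) (A : lmodType R) : noetherian_ring R ->
  is_local_with m -> artinian_module A ->
  forall x : A, exists k, forall a, ideal_pow m k a -> a *: x = 0.
Proof.
move=> Hn Hl Ha x.
have [Hm m1] := local_ideal Hl.
pose Nc j := ideal_smul (ideal_pow m j) (fun y => y = x).
have Ncs : forall j, is_submodule (Nc j) by move=> j; apply: smul_sub; apply: pow_ideal.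
have [k Hk] := Ha Nc Ncs (fun i v => @smul_monoI A _ _ (fun y => y = x) (@pow_succ_sub m i Hm) v).
have Hmk := pow_ideal k Hm.
have [r [g [Hg Hgen]]] := fg_ideal Hn Hmk.
pose z i := g i *: x.
have spn0 : forall P : R -> Prop, P 0 -> spn z r P 0.
  by move=> P P0; exists (fun _ => 0); split=> //; rewrite big1 // => i _; rewrite scale0r.
have spnD : forall P : R -> Prop, (forall a b, P a -> P b -> P (a + b)) ->
    forall u w, spn z r P u -> spn z r P w -> spn z r P (u + w).
  move=> P PD u w [c [Hc ->]] [c' [Hc' ->]]; exists (fun i => c i + c' i); split.
    by move=> i; apply: PD.
  by rewrite -big_split /=; apply: eq_bigr => i _; rewrite scalerDl.
have NS : forall v, Nc k v -> spn z r (fun _ => True) v.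
  apply: gspan_ind; first exact: spn0.
    by move=> u w; apply: spnD.
  move=> a y /Hgen [c ->] ->; exists c; split=> //.
  by rewrite scaler_suml; apply: eq_bigr => i _; rewrite scalerA.
have SN : forall v, spn z r (fun _ => True) v -> Nc k v.
  move=> v [c [_ ->]].
  have -> : \sum_(i < r) c i *: z i = (\sum_(i < r) c i * g i) *: x.
    by rewrite scaler_suml; apply: eq_bigr => i _; rewrite scalerA.
  apply: gspan1 => //; apply: (@ideal_sum (ideal_pow m k) r (fun i => c i * g i) Hmk) => i.
  by case: Hmk => _ [_ IM]; apply: IM.
have [m0 [mD mM]] := Hm.
have Hz : forall v, spn z r (fun _ => True) v -> spn z r m v.
  move=> v /SN /(Hk k.+1 (leqnSn k)) /smul_succ => /(_ Hm); move: v.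
  apply: gspan_ind; first exact: spn0.
    by move=> u w; apply: spnD.
  move=> b w mb /NS [c [_ ->]]; exists (fun i => b * c i); split.
    by move=> i; rewrite mulrC; apply: mM.
  by rewrite scaler_sumr; apply: eq_bigr => i _; rewrite scalerA.
exists k => a Hak; apply: (nakayama Hm (unit_1m Hn Hl) Hz).
by apply: NS; apply: gspan1.
Qed.

Fixpoint cnt {V : Type} (c : nat -> V -> Prop) k : nat :=
  if k is k'.+1 then (cnt c k' + `[< exists x, c k'.+1 x /\ ~ c k' x >])%N else 0%N.

Section Count.
Variable V : lmodType R.

Lemma count_chain (N0 M : V -> Prop) (c : nat -> V -> Prop) k :
  (forall i, is_submodule (c i)) -> (forall i x, (i <= k)%N -> N0 x -> c i x) ->
  (forall i x, (i <= k)%N -> c i x -> M x) ->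
  (forall i x, (i < k)%N -> c i x -> c i.+1 x) -> chain_between N0 M (cnt c k).
Proof.
move=> cs cN cM cmono.
have main : forall k', (k' <= k)%N -> exists d : nat -> V -> Prop,
   (forall r, exists i, (i <= k')%N /\ d r = c i) /\
   (forall r, (r < cnt c k')%N -> (forall x, d r x -> d r.+1 x) /\ exists x, d r.+1 x /\ ~ d r x) /\
   (forall x, d (cnt c k') x <-> c k' x).
  elim=> [|k' IH] hk.
    exists (fun _ => c 0%N); split; first by move=> r; exists 0%N.
    by split.
  have [d [d1 [d2 d3]]] := IH (ltnW hk).
  case: (pselect (exists x, c k'.+1 x /\ ~ c k' x)) => h.
    have -> : cnt c k'.+1 = (cnt c k').+1 by rewrite /= asboolT // addn1.
    set n := cnt c k' in d2 d3 *.
    exists (fun r => if r == n.+1 then c k'.+1 else d r); split.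
      move=> r; case: (r == n.+1); first by exists k'.+1.
      by have [i [hi ->]] := d1 r; exists i; split=> //; apply: ltnW.
    split; last by rewrite eqxx.
    move=> r; rewrite ltnS leq_eqVlt => /orP[/eqP->|rn].
      rewrite eqxx (ltn_eqF (ltnSn n)); split.
        by move=> x /d3 /cmono; apply.
      by have [x [h1 h2]] := h; exists x; split=> // /d3.
    rewrite eqSS !(ltn_eqF rn) (ltn_eqF (ltn_trans rn (ltnSn n))).
    exact: d2.
  have -> : cnt c k'.+1 = cnt c k' by rewrite /= asboolF // addn0.
  exists d; split; first by move=> r; have [i [hi ->]] := d1 r; exists i; split=> //; apply: ltnW.
  split=> // x; split; first by move/d3; apply: cmono.
  move=> hx; apply/d3; case: (pselect (c k' x)) => // nx.
  by exfalso; apply: h; exists x.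
have [d [d1 [d2 d3]]] := main k (leqnn k).
exists d; split; first by move=> r; have [i [_ ->]] := d1 r.
split.
  by move=> r x _ hx; have [i [hi ->]] := d1 r; apply: cN => //; apply: leq_trans hi _.
split.
  by move=> r x _; have [i [hi ->]] := d1 r; apply: cM; apply: leq_trans hi _.
exact: d2.
Qed.

Lemma count_bound (N0 M : V -> Prop) l (c : nat -> V -> Prop) k :
  length_bounded_by N0 M l ->
  (forall i, is_submodule (c i)) -> (forall i x, (i <= k)%N -> N0 x -> c i x) ->
  (forall i x, (i <= k)%N -> c i x -> M x) ->
  (forall i x, (i < k)%N -> c i x -> c i.+1 x) -> (cnt c k <= l)%N.
Proof. by move=> HB cs cN cM cmono; apply: HB; apply: count_chain. Qed.
End Count.

Lemma zero_bound (V : lmodType R) (H : V -> Prop) :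
  (forall x, H x -> x = 0) -> length_bounded_by (@zero_sub R V) H 0.
Proof.
move=> HH [|k] // [c [cs [c0 [cH cst]]]].
have [_ [x [x1 x0]]] := cst 0%N (ltn0Sn k).
have := HH x (cH 1%N x (ltn0Sn k) x1) => ex; subst x.
by exfalso; apply: x0; apply: c0.
Qed.

Lemma prod_bound (V W : lmodType R) (N : W -> Prop) l
  (HN : length_bounded_by (@zero_sub R W) N l) (phi : nat -> V -> W)
  (phil : forall p, is_lin (phi p)) : forall j (H : V -> Prop),
  (forall x, H x -> forall p, (p < j)%N -> N (phi p x)) ->
  (forall x, H x -> (forall p, (p < j)%N -> phi p x = 0) -> x = 0) ->
  length_bounded_by (@zero_sub R V) H (j * l).
Proof.
elim=> [|j IH] H HNH Hinj.
  by rewrite mul0n; apply: zero_bound => x Hx; apply: Hinj.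
move=> k [c [cs [c0 [cH cst]]]].
have f0 := lin0 (phil j).
pose C' i := fun x => c i x /\ phi j x = 0.
pose D i := fun y => exists x, c i x /\ y = phi j x.
have B1 : (cnt C' k <= j * l)%N.
  have HB := @count_bound V (@zero_sub R V) (fun x => H x /\ phi j x = 0) (j * l) C' k.
  apply: HB.
  - apply: IH.
      by move=> x [Hx _] p pj; apply: HNH => //; apply: ltnW.
    move=> x [Hx Hx0] Hp; apply: Hinj => // p; rewrite ltnS leq_eqVlt => /orP[/eqP->//|].
    by apply: Hp.
  - move=> i; have [c0' [cD cZ]] := cs i; split; first by split.
    split; first by move=> x y [hx px] [hy py]; split; [apply: cD | rewrite linD // px py addr0].
    by move=> r x [hx px]; split; [apply: cZ | rewrite linZ // px scaler0].
  - by move=> i x ik x0; split; [apply: c0 | rewrite x0].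
  - by move=> i x ik [hx px]; split => //; apply: cH hx.
  - by move=> i x ik [hx px]; split => //; apply: (cst i ik).1.
have B2 : (cnt D k <= l)%N.
  have HB := @count_bound W (@zero_sub R W) N l D k HN.
  apply: HB.
  - move=> i; have [c0' [cD cZ]] := cs i; split; first by exists 0.
    split; first by move=> x y [u [hu ->]] [w [hw ->]]; exists (u + w); split; [apply: cD | rewrite linD].
    by move=> r x [u [hu ->]]; exists (r *: u); split; [apply: cZ | rewrite linZ].
  - by move=> i x ik x0; exists 0; split; [apply: c0 | rewrite x0].
  - by move=> i x ik [u [hu ->]]; apply: HNH; [apply: cH hu | apply: ltnSn].
  - by move=> i x ik [u [hu ->]]; exists u; split => //; apply: (cst i ik).1.
have step : forall i, (i < k)%N ->
    (1 <= `[< exists x, C' i.+1 x /\ ~ C' i x >] + `[< exists x, D i.+1 x /\ ~ D i x >])%N.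
  move=> i ik.
  case: (pselect (exists x, C' i.+1 x /\ ~ C' i x)) => h1; first by rewrite asboolT.
  case: (pselect (exists x, D i.+1 x /\ ~ D i x)) => h2; first by rewrite (asboolT h2); apply: leq_addl.
  exfalso; have [mono [x [x1 x0]]] := cst i ik.
  have [y [yi ey]] : D i (phi j x).
    case: (pselect (D i (phi j x))) => // nd; exfalso; apply: h2.
    by exists (phi j x); split => //; exists x.
  have xy1 : c i.+1 (x - y).
    have [_ [cD _]] := cs i.+1; apply: cD => //; apply: sub_opp => //; exact: mono.
  have pxy : phi j (x - y) = 0.
    by rewrite linD // -scaleN1r linZ // scaleN1r ey subrr.
  have xy0 : c i (x - y).
    case: (pselect (C' i (x - y))) => [[]//|nc]; exfalso; apply: h1.
    by exists (x - y).
  apply: x0; have [_ [cD _]] := cs i; have := cD _ _ xy0 yi.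
  by rewrite subrK.
have : (k <= cnt C' k + cnt D k)%N.
  have : forall k', (k' <= k)%N -> (k' <= cnt C' k' + cnt D k')%N.
    elim=> [//|k' IHk] hk; rewrite [cnt C' _]/= [cnt D _]/=.
    rewrite -[X in (X <= _)%N]addn1 addnACA.
    exact: (leq_add (IHk (ltnW hk)) (step k' hk)).
  by apply.
move=> hk; apply: leq_trans hk _; rewrite mulSnr; exact: leq_add B1 B2.
Qed.

Section Len.
Variable V : lmodType R.
Lemma len_bound_le (N M : V -> Prop) b : length_bounded_by N M b -> ele (len_quot N M) (Some b).
Proof.
move=> hb; rewrite /len_quot; case: pselect => [h|h]; last by exfalso; apply: h; exists b.
rewrite /=; case: ex_minnP => b' _ hmin; apply: hmin; exact/asboolP.
Qed.

Lemma len_some (N M : V -> Prop) b : len_quot N M = Some b -> length_bounded_by N M b.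
Proof.
rewrite /len_quot; case: pselect => [h|h] //= [<-].
by case: ex_minnP => b' /asboolP.
Qed.

Lemma bound0_sub (N0 M : V -> Prop) : is_submodule N0 -> is_submodule M ->
  (forall x, N0 x -> M x) -> length_bounded_by N0 M 0 -> forall x, M x -> N0 x.
Proof.
move=> sN sM NM hb x Mx; case: (pselect (N0 x)) => // nx; exfalso.
have : (1 <= 0)%N; last by [].
apply: hb; exists (fun i => if i == 0%N then N0 else M); split.
  by move=> i; case: (i == 0%N).
split; first by move=> i y _ Ny; case: (i == 0%N) => //; apply: NM.
split; first by move=> i y _; case: (i == 0%N) => //; apply: NM.
move=> i; rewrite ltnS leqn0 => /eqP-> /=; split; first exact: NM.
by exists x.
Qed.
End Len.

Lemma hom_lin (V W : lmodType R) (f : V -> W) : Hom_sub f -> is_lin f.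
Proof. by []. Qed.

Section Main.
Variables (m : R -> Prop) (A L : lmodType R) (n t s : nat).
Hypotheses (Hn : noetherian_ring R) (Hl : is_local_with m) (HA : artinian_module A)
  (HL : forall x, ideal_smul (ideal_pow m n) (torsion_m m) x -> x = 0 :> L)
  (Ht : forall x : A, ideal_smul (ideal_pow m t) (@whole R A) x <->
                 ideal_smul (ideal_pow m t.+1) (@whole R A) x)
  (Hs : (minn n t <= s)%N).

Let Hm : is_ideal m := (local_ideal Hl).1.

Lemma hom_torsion (f : A -> L) : Hom_sub f -> forall x, torsion_m m (f x).
Proof.
move=> /hom_lin fH x; have [k Hk] := torsion_artinian Hn Hl HA x.
exists k => a Ha; rewrite -(linZ fH) Hk //; exact: lin0 fH.
Qed.

Lemma hom_mn (f : A -> L) : Hom_sub f -> forall v,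
  ideal_smul (ideal_pow m n) (@whole R A) v -> f v = 0.
Proof.
move=> fH0; have fH := hom_lin fH0; move=> v /(smul_image fH) hv; apply: HL; move: hv; apply: smul_monoN.
by move=> y [x [_ ->]]; apply: hom_torsion.
Qed.

Lemma tpow i v : ideal_smul (ideal_pow m t) (@whole R A) v ->
  ideal_smul (ideal_pow m (t + i)) (@whole R A) v.
Proof.
elim: i v => [|i IH] v; first by rewrite addn0.
move=> /Ht /(smul_succ Hm) hv; rewrite addnS; apply: (smul_succ' Hm).
by move: hv; apply: smul_monoN; apply: IH.
Qed.

Lemma hom_ms (f : A -> L) : Hom_sub f -> forall y, annihilated_by m s (f y).
Proof.
move=> fH0; have fH := hom_lin fH0; move=> y a Ha; rewrite -(linZ fH); apply: (hom_mn fH0).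
have hu : ideal_smul (ideal_pow m (minn n t)) (@whole R A) (a *: y).
  apply: gspan1 => //; exact: (pow_le Hm Hs).
case: (leqP n t) => nt.
  by move: hu; rewrite (minn_idPl nt).
move: hu; rewrite (minn_idPr (ltnW nt)) => /(tpow (n - t)).
by rewrite subnKC // ltnW.
Qed.

Let mA := ideal_smul m (@whole R A).
Let WW := Gr (@whole R A) mA.
Let mAs : is_submodule mA := smul_sub _ Hm.

Lemma gen_full b : length_bounded_by mA (@whole R A) b -> forall y, WW b y.
Proof.
move=> hb y; case: (pselect (WW b y)) => // ny; exfalso.
have nf : forall i, (i <= b)%N -> exists y, whole y /\ ~ WW i y.
  by move=> i ib; exists y; split=> // /(Gr_le ib).
have : (b.+1 <= b)%N; last by rewrite ltnn.
apply: hb; exists WW; split; first exact: (Gr_sub _ mAs).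
split; first by move=> i x _ Hx; apply: (Gr_le (leq0n i)).
split; first by [].
move=> i ib; split; first exact: Gr_S.
exists (pk (@whole R A) (WW i)); split; first exact: (Gr_pk _ mAs).
by have [_] := pk_spec (nf i ib).
Qed.

Lemma hom_zero_gen b (f : A -> L) : Hom_sub f ->
  (forall p, (p < b)%N -> f (pk (@whole R A) (WW p)) = 0) -> (forall y, WW b y) -> f = 0.
Proof.
move=> fH0; have fH := hom_lin fH0; move=> f0 full.
pose img := fun y : L => exists x, (@whole R A) x /\ y = f x.
have [T0 [TD TZ]] := smul_sub img Hm.
have step : forall i, (i <= b)%N -> forall v, WW i v -> ideal_smul m img (f v).
  elim=> [|i IH] ib v.
    by move=> hv; apply: smul_image.
  move=> [w [r [hw ->]]]; rewrite (linD fH) (linZ fH) f0 // scaler0 addr0.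
  by apply: IH => //; apply: ltnW.
have pw : forall j x, ideal_smul (ideal_pow m j) img (f x).
  elim=> [|j IH] x.
    by rewrite -[f x]scale1r; apply: gspan1 => //; exists x.
  apply: (smul_succ' Hm); move: (step b (leqnn b) x (full x)); apply: smul_monoN.
  by move=> y [x' [_ ->]]; apply: IH.
apply/funext => x; apply: HL; move: (pw n x); apply: smul_monoN.
by move=> y [x' [_ ->]]; apply: hom_torsion.
Qed.

Lemma main_bound b l : length_bounded_by mA (@whole R A) b ->
  length_bounded_by (@zero_sub R L) (annihilated_by m s) l ->
  length_bounded_by (@zero_sub R (A -> L)) (@Hom_sub R A L) (b * l).
Proof.
move=> hb hl.
apply: (@prod_bound (A -> L) L (annihilated_by m s) l hl (fun p f => f (pk (@whole R A) (WW p)))).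
- by move=> p r f g.
- by move=> f fH p _; apply: hom_ms.
- by move=> f fH Hp; apply: (hom_zero_gen fH Hp); apply: gen_full.
Qed.

Lemma hom_zero_N : length_bounded_by (@zero_sub R L) (annihilated_by m s) 0 ->
  length_bounded_by (@zero_sub R (A -> L)) (@Hom_sub R A L) 0.
Proof.
move=> h0; apply: zero_bound => f fH; apply/funext => y.
apply: (bound0_sub _ _ _ h0).
- split=> //; split; first by move=> x y' -> ->; rewrite addr0.
  by move=> r x ->; rewrite scaler0.
- split; first by move=> a _; rewrite scaler0.
  split; first by move=> x y' hx hy a ha; rewrite scalerDr hx ?hy ?addr0.
  by move=> r x hx a ha; rewrite scalerA mulrC -scalerA hx // scaler0.
- by move=> x -> a _; rewrite scaler0.
- exact: hom_ms.
Qed.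

Lemma hom_zero_b : length_bounded_by mA (@whole R A) 0 ->
  length_bounded_by (@zero_sub R (A -> L)) (@Hom_sub R A L) 0.
Proof.
move=> h0; apply: zero_bound => f fH.
by apply: (hom_zero_gen (b := 0%N) fH) => //; apply: gen_full.
Qed.
End Main.
End Rsec.

Theorem theorem2p11 (R : comNzRingType) (m : R -> Prop)
  (A L : lmodType R) (n t s : nat) :
  noetherian_ring R ->
  is_local_with m ->
  artinian_module A ->
  (1 <= n)%N ->
  (forall x, ideal_smul (ideal_pow m n) (torsion_m m) x -> x = 0 :> L) ->
  (forall x : A, ideal_smul (ideal_pow m t) (@whole R A) x <->
                 ideal_smul (ideal_pow m t.+1) (@whole R A) x) ->
  (minn n t <= s)%N ->
  ele (len_sub (@Hom_sub R A L))
      (emul (len_quot (ideal_smul m (@whole R A)) (@whole R A))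
            (len_sub (annihilated_by m s : L -> Prop))).
Proof.
move=> Hn Hl HA n1 HL Ht Hs.
case Eb: (len_quot (ideal_smul m (@whole R A)) (@whole R A)) => [[|b]|];
  case El: (len_sub (annihilated_by m s : L -> Prop)) => [[|l]|] /=.
- by apply: len_bound_le; apply: (hom_zero_b Hn Hl HA HL); apply: len_some.
- by apply: len_bound_le; apply: (hom_zero_b Hn Hl HA HL); apply: len_some.
- by apply: len_bound_le; apply: (hom_zero_b Hn Hl HA HL); apply: len_some.
- by apply: len_bound_le; apply: (hom_zero_N Hn Hl HA HL Ht Hs); apply: len_some.
- apply: len_bound_le; apply: (main_bound Hn Hl HA HL Ht Hs); exact: len_some.
- by case: (len_sub _).
- by apply: len_bound_le; apply: (hom_zero_N Hn Hl HA HL Ht Hs); apply: len_some.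
- by case: (len_sub _).
- by case: (len_sub _).
Qed.
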